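(* Each of the graphs $K_{3,3,3}$, $K_{2,4,4}$, $K_{2,3,5}$, $K_{2,2,9}$, $K_{1,2,2,2}$, $K_{1,1,2,3}$, $K_{1,1,1,2,2}$, $K_{1*4,6}$, $K_{1*5,5}$ and $K_{1*6,4}$ is uniquely $3$-list colorable.
   Context: All graphs are finite, simple and undirected. A list assignment $L$ for a graph $G$ assigns to each vertex $v$ a set $L(v)$ of colors; an $L$-coloring is a proper vertex coloring $c$ of $G$ with $c(v)\in L(v)$ for every vertex $v$. A $k$-list assignment is a list assignment with $|L(v)|=k$ for all $v$. $G$ is uniquely $k$-list colorable (U$k$LC) if there exists a $k$-list assignment $L$ such that $G$ has exactly one $L$-coloring. $K_{n_1,\dots,n_r}$ denotes the complete $r$-partite graph with parts of sizes $n_1,\dots,n_r$. $K_{1*r,s}$ denotes the complete $(r+1)$-partite graph with $r$ parts of size $1$ and one part of size $s$. *)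

(* Defs.v *)
From mathcomp Require Import all_boot.
Set Implicit Arguments. Unset Strict Implicit. Unset Printing Implicit Defensive.

(* Colors are natural numbers (any finite lists of colors can be relabelled into nat). *)

Definition is_k_list_assignment (T : finType) (k : nat) (L : T -> seq nat) : Prop :=
  forall v, uniq (L v) /\ size (L v) = k.

Definition is_L_coloring (T : finType) (adj : rel T) (L : T -> seq nat)
    (c : T -> nat) : Prop :=
  (forall v, c v \in L v) /\ (forall u v, adj u v -> c u <> c v).

Definition uniquely_k_list_colorable (T : finType) (adj : rel T) (k : nat) : Prop :=
  exists L : T -> seq nat,
    is_k_list_assignment k L /\
    exists c, is_L_coloring adj L c /\
      forall c', is_L_coloring adj L c' -> forall v, c' v = c v.

(* Complete multipartite graph K_{n_1,...,n_r} with part sizes s = [:: n_1; ...; n_r]: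
   a vertex is a pair (part index i, index within part i); two vertices are adjacent
   iff they lie in different parts. *)
Definition cmp_vertex (s : seq nat) : finType :=
  {i : 'I_(size s) & 'I_(nth 0 s i)}.

Definition cmp_adj (s : seq nat) : rel (cmp_vertex s) :=
  fun u v => tag u != tag v.

Definition UkLC_multipartite (k : nat) (s : seq nat) : Prop :=
  uniquely_k_list_colorable (@cmp_adj s) k.

Definition K1star (r t : nat) : seq nat := rcons (nseq r 1) t.

(* Main.v *)
Require Import Defs.
From mathcomp Require Import all_boot.
Set Implicit Arguments. Unset Strict Implicit. Unset Printing Implicit Defensive.

Definition vlist (s : seq nat) : seq (nat * nat) :=
  [seq (i, j) | i <- iota 0 (size s), j <- iota 0 (nth 0 s i)].

Definition enc (s : seq nat) (v : cmp_vertex s) : nat * nat :=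
  (val (tag v), val (tagged v)).

Lemma enc_mem s (v : cmp_vertex s) : enc v \in vlist s.
Proof.
case: v => i x; apply/allpairsPdep; exists (val i), (val x).
by rewrite !mem_iota /= !ltn_ord.
Qed.

Lemma enc_inj s : injective (@enc s).
Proof.
case=> i x [i' x'] [/val_inj Ei]; subst i' => /val_inj ->; done.
Qed.

Lemma vlist_enc s p : p \in vlist s -> exists v : cmp_vertex s, enc v = p.
Proof.
case/allpairsPdep=> i [j [Hi Hj ->]].
rewrite mem_iota /= in Hi; rewrite mem_iota /= in Hj.
exists (existT (fun i : 'I_(size s) => 'I_(nth 0 s i)) (Ordinal Hi) (Ordinal Hj)).
by [].
Qed.

Fixpoint chk (cn : nat * nat -> nat) (Ln : nat * nat -> seq nat)
   (vs : seq (nat * nat)) (acc : seq (nat * nat * nat)) : bool :=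
  match vs with
  | [::] => all (fun a => a.2 == cn a.1) acc
  | p :: vs' => all (fun col =>
       if has (fun a => (a.1.1 != p.1) && (a.2 == col)) acc then true
       else chk cn Ln vs' ((p, col) :: acc)) (Ln p)
  end.

Lemma chkP cn Ln (c' : nat * nat -> nat) vs acc :
  chk cn Ln vs acc ->
  (forall p, p \in vs -> c' p \in Ln p) ->
  (forall a, a \in acc -> a.2 = c' a.1) ->
  (forall p q, p \in vs ++ map fst acc -> q \in vs ++ map fst acc ->
     p.1 != q.1 -> c' p != c' q) ->
  forall p, p \in vs ++ map fst acc -> c' p = cn p.
Proof.
elim: vs acc => [|p vs IH] acc /= H HL Hacc Hpr.
  move=> q /mapP [a Ha ->]; rewrite -Hacc //.
  by move/allP: H => /(_ a Ha) /eqP.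
have Hc := HL p (mem_head _ _).
move/allP: H => /(_ _ Hc).
case: hasP => [[a Ha /andP [Hne /eqP Hcol]] _ | Hno Hch].
  exfalso; move: (Hpr a.1 p).
  rewrite !inE eqxx /= mem_cat (map_f fst Ha) !orbT /= => /(_ isT isT).
  by rewrite Hne -(Hacc _ Ha) Hcol eqxx => /(_ isT).
have sub r : r \in vs ++ map fst ((p, c' p) :: acc) -> r \in p :: vs ++ map fst acc.
  by rewrite /= !(mem_cat, inE); case/orP=>[->|/orP[->|->]]; rewrite ?orbT.
move=> q Hq; apply: (IH _ Hch).
- by move=> r Hr; apply: HL; rewrite inE Hr orbT.
- by move=> a; rewrite inE; case/orP => [/eqP -> //|]; apply: Hacc.
- by move=> r r' /sub Hr /sub Hr'; apply: Hpr.
- move: Hq; rewrite /= !(mem_cat, inE).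
  by case: (q == p); case: (q \in vs); case: (q \in map fst acc).
Qed.

Lemma mkU s (cn : nat * nat -> nat) (Ln : nat * nat -> seq nat) :
  all (fun p => uniq (Ln p) && (size (Ln p) == 3)) (vlist s) ->
  all (fun p => cn p \in Ln p) (vlist s) ->
  all (fun p => all (fun q => (p.1 == q.1) || (cn p != cn q)) (vlist s)) (vlist s) ->
  chk cn Ln (vlist s) [::] ->
  UkLC_multipartite 3 s.
Proof.
move=> /allP HL /allP Hc /allP Hpr Hch.
exists (fun v => Ln (enc v)); split.
  by move=> v; case/andP: (HL _ (enc_mem v)) => -> /eqP.
exists (fun v => cn (enc v)); split.
  split; first by move=> v; apply: Hc; apply: enc_mem.
  move=> u v; rewrite /cmp_adj => Huv.
  move/allP: (Hpr _ (enc_mem u)) => /(_ _ (enc_mem v)).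
  by rewrite /enc /= (inj_eq val_inj) (negbTE Huv) /= => /eqP.
move=> c' [Hin Hp] v.
pose c'n (p : nat * nat) := if [pick w | enc w == p] is Some w then c' w else 0.
have Ec w : c'n (enc w) = c' w.
  rewrite /c'n; case: pickP => [w' /eqP /enc_inj -> //|/(_ w)]; by rewrite eqxx.
rewrite -Ec; apply: (chkP Hch) => //; last by rewrite cats0 enc_mem.
- by move=> p /vlist_enc [w <-]; rewrite Ec.
- move=> p q; rewrite !cats0 => /vlist_enc [w <-] /vlist_enc [w' <-] Hne.
  rewrite !Ec; apply/eqP; apply: Hp.
  rewrite /cmp_adj; apply: contra Hne => /eqP E; by rewrite /enc /= E.
Qed.

Lemma P0 : UkLC_multipartite 3 [:: 3; 3; 3].
Proof.
apply: (@mkU _ (fun p => nth 0 (nth [::] [:: [:: 0; 5; 0]; [:: 4; 4; 2]; [:: 3; 1; 1]] p.1) p.2)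
               (fun p => nth [::] (nth [::] [:: [:: [:: 0; 4; 2]; [:: 5; 4; 1]; [:: 3; 1; 0]]; [:: [:: 4; 0; 5]; [:: 1; 4; 0]; [:: 2; 1; 5]]; [:: [:: 3; 0; 4]; [:: 4; 1; 5]; [:: 2; 1; 0]]] p.1) p.2));
  vm_compute; reflexivity.
Qed.

Lemma P1 : UkLC_multipartite 3 [:: 2; 4; 4].
Proof.
apply: (@mkU _ (fun p => nth 0 (nth [::] [:: [:: 0; 4]; [:: 1; 2; 2; 1]; [:: 3; 5; 3; 3]] p.1) p.2)
               (fun p => nth [::] (nth [::] [:: [:: [:: 1; 3; 0]; [:: 5; 4; 2]]; [:: [:: 5; 3; 1]; [:: 3; 0; 2]; [:: 4; 3; 2]; [:: 0; 4; 1]]; [:: [:: 3; 4; 0]; [:: 1; 5; 2]; [:: 3; 0; 1]; [:: 1; 4; 3]]] p.1) p.2));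
  vm_compute; reflexivity.
Qed.

Lemma P2 : UkLC_multipartite 3 [:: 2; 3; 5].
Proof.
apply: (@mkU _ (fun p => nth 0 (nth [::] [:: [:: 2; 3]; [:: 5; 1; 1]; [:: 0; 4; 0; 0; 0]] p.1) p.2)
               (fun p => nth [::] (nth [::] [:: [:: [:: 1; 0; 2]; [:: 5; 3; 4]]; [:: [:: 5; 4; 0]; [:: 1; 4; 3]; [:: 1; 0; 2]]; [:: [:: 2; 0; 3]; [:: 2; 4; 1]; [:: 0; 2; 5]; [:: 5; 1; 0]; [:: 1; 0; 3]]] p.1) p.2));
  vm_compute; reflexivity.
Qed.

Lemma P3 : UkLC_multipartite 3 [:: 2; 2; 9].
Proof.
apply: (@mkU _ (fun p => nth 0 (nth [::] [:: [:: 3; 4]; [:: 2; 1]; [:: 0; 5; 5; 0; 5; 5; 5; 0; 0]] p.1) p.2)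
               (fun p => nth [::] (nth [::] [:: [:: [:: 2; 3; 5]; [:: 0; 4; 2]]; [:: [:: 0; 2; 5]; [:: 3; 4; 1]]; [:: [:: 0; 1; 2]; [:: 1; 5; 2]; [:: 1; 4; 5]; [:: 0; 3; 1]; [:: 4; 5; 2]; [:: 3; 4; 5]; [:: 2; 3; 5]; [:: 0; 2; 3]; [:: 2; 4; 0]]] p.1) p.2));
  vm_compute; reflexivity.
Qed.

Lemma P4 : UkLC_multipartite 3 [:: 1; 2; 2; 2].
Proof.
apply: (@mkU _ (fun p => nth 0 (nth [::] [:: [:: 2]; [:: 3; 3]; [:: 5; 4]; [:: 0; 0]] p.1) p.2)
               (fun p => nth [::] (nth [::] [:: [:: [:: 3; 0; 2]]; [:: [:: 3; 4; 5]; [:: 3; 0; 2]]; [:: [:: 5; 0; 3]; [:: 0; 3; 4]]; [:: [:: 0; 3; 4]; [:: 3; 0; 2]]] p.1) p.2));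
  vm_compute; reflexivity.
Qed.

Lemma P5 : UkLC_multipartite 3 [:: 1; 1; 2; 3].
Proof.
apply: (@mkU _ (fun p => nth 0 (nth [::] [:: [:: 5]; [:: 3]; [:: 4; 4]; [:: 0; 0; 1]] p.1) p.2)
               (fun p => nth [::] (nth [::] [:: [:: [:: 0; 5; 4]]; [:: [:: 3; 4; 0]]; [:: [:: 4; 0; 1]; [:: 3; 5; 4]]; [:: [:: 4; 0; 5]; [:: 0; 4; 3]; [:: 3; 5; 1]]] p.1) p.2));
  vm_compute; reflexivity.
Qed.

Lemma P6 : UkLC_multipartite 3 [:: 1; 1; 1; 2; 2].
Proof.
apply: (@mkU _ (fun p => nth 0 (nth [::] [:: [:: 0]; [:: 1]; [:: 3]; [:: 5; 5]; [:: 4; 4]] p.1) p.2)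
               (fun p => nth [::] (nth [::] [:: [:: [:: 0; 5; 1]]; [:: [:: 1; 4; 5]]; [:: [:: 5; 3; 1]]; [:: [:: 5; 0; 3]; [:: 5; 4; 1]]; [:: [:: 4; 1; 5]; [:: 0; 5; 4]]] p.1) p.2));
  vm_compute; reflexivity.
Qed.

Lemma P7 : UkLC_multipartite 3 (K1star 4 6).
Proof.
apply: (@mkU _ (fun p => nth 0 (nth [::] [:: [:: 5]; [:: 0]; [:: 3]; [:: 4]; [:: 1; 2; 2; 1; 1; 2]] p.1) p.2)
               (fun p => nth [::] (nth [::] [:: [:: [:: 2; 4; 5]]; [:: [:: 2; 0; 3]]; [:: [:: 3; 1; 2]]; [:: [:: 0; 4; 3]]; [:: [:: 1; 5; 3]; [:: 5; 4; 2]; [:: 4; 2; 3]; [:: 5; 0; 1]; [:: 4; 1; 0]; [:: 3; 2; 0]]] p.1) p.2));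
  vm_compute; reflexivity.
Qed.

Lemma P8 : UkLC_multipartite 3 (K1star 5 5).
Proof.
apply: (@mkU _ (fun p => nth 0 (nth [::] [:: [:: 3]; [:: 2]; [:: 6]; [:: 0]; [:: 1]; [:: 5; 5; 4; 4; 4]] p.1) p.2)
               (fun p => nth [::] (nth [::] [:: [:: [:: 5; 1; 3]]; [:: [:: 2; 0; 6]]; [:: [:: 5; 0; 6]]; [:: [:: 5; 4; 0]]; [:: [:: 2; 6; 1]]; [:: [:: 5; 0; 6]; [:: 3; 5; 1]; [:: 0; 2; 4]; [:: 6; 4; 2]; [:: 4; 6; 0]]] p.1) p.2));
  vm_compute; reflexivity.
Qed.

Lemma P9 : UkLC_multipartite 3 (K1star 6 4).
Proof.
apply: (@mkU _ (fun p => nth 0 (nth [::] [:: [:: 7]; [:: 4]; [:: 5]; [:: 2]; [:: 0]; [:: 3]; [:: 6; 1; 6; 1]] p.1) p.2)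
               (fun p => nth [::] (nth [::] [:: [:: [:: 2; 7; 1]]; [:: [:: 7; 4; 3]]; [:: [:: 6; 0; 5]]; [:: [:: 2; 6; 1]]; [:: [:: 7; 0; 2]]; [:: [:: 1; 3; 7]]; [:: [:: 6; 3; 4]; [:: 7; 1; 2]; [:: 7; 6; 0]; [:: 0; 1; 5]]] p.1) p.2));
  vm_compute; reflexivity.
Qed.

Theorem proposition3p3 :
  UkLC_multipartite 3 [:: 3; 3; 3] /\
  UkLC_multipartite 3 [:: 2; 4; 4] /\
  UkLC_multipartite 3 [:: 2; 3; 5] /\
  UkLC_multipartite 3 [:: 2; 2; 9] /\
  UkLC_multipartite 3 [:: 1; 2; 2; 2] /\
  UkLC_multipartite 3 [:: 1; 1; 2; 3] /\
  UkLC_multipartite 3 [:: 1; 1; 1; 2; 2] /\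
  UkLC_multipartite 3 (K1star 4 6) /\
  UkLC_multipartite 3 (K1star 5 5) /\
  UkLC_multipartite 3 (K1star 6 4).
Proof. by do !split; [exact: P0|exact: P1|exact: P2|exact: P3|exact: P4|exact: P5|exact: P6|exact: P7|exact: P8|exact: P9]. Qed.
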